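(* Let $\varphi(\bm x,\bm y,w,\bm z)$ be a $w$-simple Presburger formula (with $\bm u=(\bm x,\bm y,\bm z)$ in the definition below), where $w$ is a single variable and $\bm x,\bm y$ have the same length. Then over $\mathbb{Z}$ the formulas $\exists^{\mathsf{ram}}\bm x,\bm y\colon\exists w\colon\varphi(\bm x,\bm y,w,\bm z)$ and $\exists^{\mathsf{ram}}(\bm x,v_1,v_2),(\bm y,w_1,w_2)\colon\varphi(\bm x,\bm y,v_1+w_2,\bm z)\wedge\bm x\neq\bm y$ are equivalent, where $v_1,v_2,w_1,w_2$ are fresh single variables.
   Context: Work over $\mathbb{Z}$ in the structure $\langle\mathbb{Z};+,<,0,1,(\equiv_e)_{e>0}\rangle$, where the modulo constraint $s\equiv_e t$ holds iff $e$ divides $s-t$. For a vector of variables $\bm u$ and a variable $w$, a formula $\varphi(\bm u,w)$ is $w$-simple if it is a Boolean combination of atoms of the forms $\bm r^\top\bm u+c<w$, $w<\bm r^\top\bm u+c$ (with $\bm r$ an integer vector and $c\in\mathbb{Z}$) and modulo constraints over $\bm u$ and $w$. Ramsey quantifier: $\exists^{\mathsf{ram}}\bm x,\bm y\colon\psi(\bm x,\bm y,\bm z)$ holds for $\bm c$ iff there is an infinite sequence of pairwise distinct integer vectors $(\bm a_i)_{i\ge1}$ with $\psi(\bm a_i,\bm a_j,\bm c)$ for all $i<j$. *)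

(* Defs.v *)
From mathcomp Require Import all_boot all_order all_algebra.
Set Implicit Arguments. Unset Strict Implicit. Unset Printing Implicit Defensive.
Import Order.TTheory GRing.Theory Num.Theory.
Local Open Scope ring_scope.

Definition zvec (n : nat) := {ffun 'I_n -> int}.

Definition dot (n : nat) (r : 'I_n -> int) (v : zvec n) : int :=
  \sum_(i < n) r i * v i.

Record uterm (k m : nat) := UTerm {
  ut_x : 'I_k -> int; ut_y : 'I_k -> int; ut_z : 'I_m -> int; ut_c : int }.

Definition eval_uterm k m (t : uterm k m) (x y : zvec k) (z : zvec m) : int :=
  dot (ut_x t) x + dot (ut_y t) y + dot (ut_z t) z + ut_c t.

Record uwterm (k m : nat) := UWTerm { uw_u : uterm k m; uw_w : int }.

Definition eval_uwterm k m (t : uwterm k m) (x y : zvec k) (w : int) (z : zvec m)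
  : int := eval_uterm (uw_u t) x y z + uw_w t * w.

Inductive wsimple (k m : nat) :=
| WTrue
| WFalse
| WLtW of uterm k m
| WGtW of uterm k m
| WMod of nat & uwterm k m & uwterm k m
| WNot of wsimple k m
| WAnd of wsimple k m & wsimple k m
| WOr of wsimple k m & wsimple k m.

Fixpoint wsimple_wf k m (f : wsimple k m) : Prop :=
  match f with
  | WMod e _ _ => (0 < e)%N
  | WNot g => wsimple_wf g
  | WAnd g h | WOr g h => wsimple_wf g /\ wsimple_wf h
  | _ => True
  end.

Fixpoint eval_ws k m (f : wsimple k m) (x y : zvec k) (w : int) (z : zvec m)
  : Prop :=
  match f with
  | WTrue => True
  | WFalse => False
  | WLtW t => eval_uterm t x y z < w
  | WGtW t => w < eval_uterm t x y z
  | WMod e s t =>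
      (e%:Z %| eval_uwterm s x y w z - eval_uwterm t x y w z)%Z
  | WNot g => ~ eval_ws g x y w z
  | WAnd g h => eval_ws g x y w z /\ eval_ws h x y w z
  | WOr g h => eval_ws g x y w z \/ eval_ws h x y w z
  end.

Definition ramsey (D : eqType) (psi : D -> D -> Prop) : Prop :=
  exists a : nat -> D,
    (forall i j : nat, i <> j -> a i <> a j) /\
    (forall i j : nat, (i < j)%N -> psi (a i) (a j)).

(* Main.v *)
Require Import Defs.
From mathcomp Require Import all_boot all_order all_algebra.
From mathcomp Require Import zify ring.
From Stdlib Require Import Classical ClassicalEpsilon.
Set Implicit Arguments. Unset Strict Implicit. Unset Printing Implicit Defensive.
Import GRing.Theory Num.Theory.
Definition inf (S : nat -> Prop) := forall N, exists n, (N <= n)%N /\ S n.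

Lemma php (D : eqType) (cs : seq D) (S : nat -> Prop) (f : nat -> D) :
  inf S -> (forall n, S n -> f n \in cs) ->
  exists2 c, c \in cs & inf (fun n => S n /\ f n = c).
Proof.
elim: cs S => [|c cs IH] S hS hf.
  by have [n [_ Sn]] := hS 0%N; have := hf n Sn.
destruct (classic (inf (fun n => S n /\ f n = c))) as [H|H].
  by exists c; rewrite ?inE ?eqxx.
have [N HN] := not_all_ex_not _ _ H.
have HN' : forall n, (N <= n)%N -> S n -> f n <> c.
  by move=> n Nn Sn fe; apply: HN; exists n.
have h1 : inf (fun n => S n /\ (N <= n)%N).
  move=> M; have [n [Mn Sn]] := hS (maxn M N); exists n; split.
    exact: leq_trans (leq_maxl _ _) Mn.
  by split => //; exact: leq_trans (leq_maxr _ _) Mn.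
have h2 : forall n, S n /\ (N <= n)%N -> f n \in cs.
  move=> n [Sn Nn]; have := hf n Sn; rewrite inE => /orP [/eqP e|//].
  by case: (HN' n Nn Sn e).
have [c' c'in Hc'] := IH _ h1 h2.
exists c'; first by rewrite inE c'in orbT.
by move=> M; have [n [Mn [[Sn _] e]]] := Hc' M; exists n.
Qed.

Definition pick (S : nat -> Prop) : nat := epsilon (inhabits 0%N) S.
Lemma pickP (X : nat -> Prop) : inf X -> X (pick X).
Proof. by move=> h; apply: (epsilon_spec (inhabits 0%N) X); have [n [_ Sn]] := h 0%N; exists n. Qed.

Section Ramsey.
Variables (D : eqType) (cs : seq D) (P : nat -> nat -> D -> Prop) (c0 : D).
Hypothesis HP : forall i j, (i < j)%N -> exists2 c, c \in cs & P i j c.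

Definition col a n := epsilon (inhabits c0) (fun c => c \in cs /\ P a n c).
Lemma colP a n : (a < n)%N -> col a n \in cs /\ P a n (col a n).
Proof. by move=> h; apply: (epsilon_spec (inhabits c0) (fun c => c \in cs /\ P a n c)); have [c ? ?] := HP h; exists c. Qed.

Definition chc S a := epsilon (inhabits c0)
  (fun c => c \in cs /\ inf (fun n => S n /\ (a < n)%N /\ P a n c)).
Lemma chcP S a : inf S ->
  chc S a \in cs /\ inf (fun n => S n /\ (a < n)%N /\ P a n (chc S a)).
Proof.
move=> hS; apply: (epsilon_spec (inhabits c0) (fun c => c \in cs /\ inf (fun n => S n /\ (a < n)%N /\ P a n c))).
have h1 : inf (fun n => S n /\ (a < n)%N).
  move=> N; have [n [Nn Sn]] := hS (maxn N a.+1); exists n; split.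
    exact: leq_trans (leq_maxl _ _) Nn.
  by split => //; exact: leq_trans (leq_maxr _ _) Nn.
have h2 : forall n, S n /\ (a < n)%N -> col a n \in cs.
  by move=> n [_ h]; case: (colP h).
have [c cin Hc] := php h1 h2.
exists c; split => // N; have [n [Nn [[Sn an] e]]] := Hc N.
by exists n; split => //; split => //; split => //; rewrite -e; case: (colP an).
Qed.

Definition next S := fun n => S n /\ (pick S < n)%N /\ P (pick S) n (chc S (pick S)).
Definition seqS n := iter n next (fun _ => True).
Lemma seqS_inf n : inf (seqS n).
Proof.
elim: n => [|n IH]; first by move=> N; exists N.
by rewrite /seqS iterS; case: (chcP (pick (seqS n)) IH).
Qed.
Lemma seqS_sub n d x : seqS (d + n) x -> seqS n x.
Proof. by elim: d => [//|d IH]; rewrite addSn /seqS iterS => -[/IH]. Qed.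

Definition an n := pick (seqS n).
Definition cn n := chc (seqS n) (an n).
Lemma key n m : (n < m)%N -> (an n < an m)%N /\ P (an n) (an m) (cn n).
Proof.
move=> nm; have : seqS m (an m) by apply: pickP; apply: seqS_inf.
rewrite -(subnK nm) => /seqS_sub; rewrite /seqS iterS => -[_ []].
by rewrite /an /cn.
Qed.

Lemma ramsey_pairs : exists g : nat -> nat, exists c,
  (forall i j, (i < j)%N -> (g i < g j)%N) /\
  (forall i j, (i < j)%N -> P (g i) (g j) c).
Proof.
have [c cin Hc] := @php D cs (fun _ => True) cn (fun N => ex_intro _ N (conj (leqnn N) I))
  (fun n _ => proj1 (chcP _ (seqS_inf n))).
pose Q := fun n => True /\ cn n = c.
pose h := fix h k := if k is k'.+1 then pick (fun n => Q n /\ (h k' < n)%N) else pick Q.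
have hQ : forall k, Q (h k) /\ (h k < h k.+1)%N.
  have QQ : forall b, inf (fun n => Q n /\ (b < n)%N).
    move=> b N; have [n [Nn Qn]] := Hc (maxn N b.+1); exists n; split.
      exact: leq_trans (leq_maxl _ _) Nn.
    by split => //; exact: leq_trans (leq_maxr _ _) Nn.
  have Qi : inf Q by move=> N; have [n [Nn Qn]] := Hc N; exists n.
  case=> [|k]; split.
  - exact: (pickP Qi).
  - by case: (pickP (QQ (h 0%N))).
  - by case: (pickP (QQ (h k))).
  - by case: (pickP (QQ (h k.+1))).
have hmono : forall i j, (i < j)%N -> (h i < h j)%N.
  move=> i j; elim: j => [//|j IH]; rewrite ltnS leq_eqVlt => /orP [/eqP ->|ij].
    exact: (proj2 (hQ j)).
  exact: ltn_trans (IH ij) (proj2 (hQ j)).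
exists (fun k => an (h k)), c; split => i j ij; have := key (hmono _ _ ij).
  by case.
by case=> _; have [_ ->] := proj1 (hQ i).
Qed.
End Ramsey.
Import Order.TTheory.
Local Open Scope ring_scope.
Section Sem.
Variables (k m : nat).

Fixpoint thr (f : wsimple k m) : seq (uterm k m) :=
  match f with
  | WLtW t | WGtW t => [:: t]
  | WNot g => thr g
  | WAnd g h | WOr g h => thr g ++ thr h
  | _ => [::]
  end.

Fixpoint mp (f : wsimple k m) : nat :=
  match f with
  | WMod e _ _ => e
  | WNot g => mp g
  | WAnd g h | WOr g h => (mp g * mp h)%N
  | _ => 1%N
  end.

Lemma mp_gt0 f : wsimple_wf f -> (0 < mp f)%N.
Proof.
elim: f => //= [g IHg h IHh [/IHg ? /IHh ?]|g IHg h IHh [/IHg ? /IHh ?]];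
  by rewrite muln_gt0; apply/andP.
Qed.

Lemma invariance f x y z (w w' : int) :
  (forall u, u \in map (fun t => eval_uterm t x y z) (thr f) ->
     (u < w) = (u < w') /\ (w < u) = (w' < u)) ->
  ((mp f)%:Z %| w - w')%Z ->
  (eval_ws f x y w z <-> eval_ws f x y w' z).
Proof.
elim: f => /=.
- by [].
- by [].
- by move=> t H _; case: (H (eval_uterm t x y z)); rewrite ?inE ?eqxx // => ->.
- by move=> t H _; case: (H (eval_uterm t x y z)); rewrite ?inE ?eqxx // => _ ->.
- move=> e s t _ /dvdzP [q hq].
  have -> : eval_uwterm s x y w z - eval_uwterm t x y w z =
     (eval_uwterm s x y w' z - eval_uwterm t x y w' z) + ((uw_w s - uw_w t) * q) * e%:Z.
    rewrite -mulrA -hq /eval_uwterm; ring.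
  rewrite rpredDr //; exact: dvdz_mull.
- by move=> g IH H d; rewrite IH.
- move=> g IHg h IHh H d.
  rewrite IHg ?IHh //.
  + by move=> u hu; apply: H; rewrite map_cat mem_cat hu orbT.
  + apply: dvdz_trans d; rewrite dvdzE /=; exact: dvdn_mull.
  + by move=> u hu; apply: H; rewrite map_cat mem_cat hu.
  + apply: dvdz_trans d; rewrite dvdzE /=; exact: dvdn_mulr.
- move=> g IHg h IHh H d.
  rewrite IHg ?IHh //.
  + by move=> u hu; apply: H; rewrite map_cat mem_cat hu orbT.
  + apply: dvdz_trans d; rewrite dvdzE /=; exact: dvdn_mull.
  + by move=> u hu; apply: H; rewrite map_cat mem_cat hu.
  + apply: dvdz_trans d; rewrite dvdzE /=; exact: dvdn_mulr.
Qed.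
End Sem.
Lemma maxP (s : seq int) (w : int) : (exists2 u, u \in s & u <= w) ->
  exists a, [/\ a \in s, a <= w & forall u, u \in s -> u <= w -> u <= a].
Proof.
elim: s => [[u]//|x s IH] [u]; rewrite inE => hu uw.
case: (boolP (has (fun u => u <= w) s)) => [/hasP [u' u's u'w]|hn].
  have [a [ain aw amax]] := IH (ex_intro2 _ _ u' u's u'w).
  case: (lerP x w) => xw.
    case: (lerP x a) => xa.
      exists a; split; first by rewrite inE ain orbT.
        by [].
      move=> v; rewrite inE => /orP [/eqP ->//|]; exact: amax.
    exists x; split; first by rewrite inE eqxx.
      by [].
    move=> v; rewrite inE => /orP [/eqP ->//|vs vw].
    have := amax v vs vw; lia.
  exists a; split; first by rewrite inE ain orbT.
    by [].
  move=> v; rewrite inE => /orP [/eqP -> vw|]; last exact: amax.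
  lia.
have xw : x <= w.
  case/orP: hu => [/eqP <- //| us]; case/hasP: hn; by exists u.
exists x; split; first by rewrite inE eqxx.
  by [].
move=> v; rewrite inE => /orP [/eqP ->//|vs vw].
by case/hasP: hn; exists v.
Qed.

Lemma minP (s : seq int) : s != [::] ->
  exists b, b \in s /\ forall u, u \in s -> b <= u.
Proof.
elim: s => [//|x s IH] _.
case: (eqVneq s [::]) => [->|sn].
  by exists x; split; rewrite ?inE ?eqxx // => u; rewrite inE => /eqP ->.
have [b [bin bmin]] := IH sn.
case: (lerP x b) => xb.
  exists x; split; first by rewrite inE eqxx.
  move=> u; rewrite inE => /orP [/eqP ->//|/bmin]; lia.
exists b; split; first by rewrite inE bin orbT.
move=> u; rewrite inE => /orP [/eqP ->|/bmin//]; lia.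
Qed.

Lemma cell0 (s : seq int) (L : nat) (w : int) : (0 < L)%N -> exists v, exists d : int,
 [/\ v = 0 \/ v \in s, - L%:Z <= d <= L%:Z,
   (forall u, u \in s -> (u < w) = (u < v + d) /\ (w < u) = (v + d < u)) &
   (L%:Z %| w - (v + d))%Z].
Proof.
move=> L0; have L0' : 0 < L%:Z by rewrite ltz_nat.
have Ln : L%:Z != 0 by rewrite gt_eqF.
case: (boolP (has (fun u => u <= w) s)) => [/hasP [u us uw]|hn].
  have [a [ain aw amax]] := maxP (ex_intro2 _ _ u us uw).
  case: (lerP (w - a) L%:Z) => hd.
    exists a, (w - a); split; [by right| lia | |].
      by move=> v _; split; lia.
    by apply/dvdzP; exists 0; lia.
  pose r := ((w - a - 1) %% L%:Z)%Z; pose q := ((w - a - 1) %/ L%:Z)%Z.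
  have r0 : 0 <= r by apply: modz_ge0.
  have rL : r < L%:Z by apply: ltz_pmod.
  have e : w - a - 1 = q * L%:Z + r by apply: divz_eq.
  move: e; set X := q * L%:Z => e.
  exists a, (r + 1); split; [by right| lia | |].
    move=> v vs; case: (lerP v w) => vw.
      have := amax v vs vw; lia.
    have : ~~ (v <= w) by rewrite -ltNge.
    move=> _; split; lia.
  apply/dvdzP; exists q; rewrite -/X; lia.
have hall : forall u, u \in s -> w < u.
  by move=> u us; rewrite ltNge; apply/negP => uw; case/hasP: hn; exists u.
case: (eqVneq s [::]) => [sn|sn].
  pose r := (w %% L%:Z)%Z; pose q := (w %/ L%:Z)%Z.
  have r0 : 0 <= r by apply: modz_ge0.
  have rL : r < L%:Z by apply: ltz_pmod.
  have e : w = q * L%:Z + r by apply: divz_eq.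
  move: e; set X := q * L%:Z => e.
  exists 0, r; split; [by left| lia | by rewrite sn |].
  apply/dvdzP; exists q; rewrite -/X; lia.
have [b [bin bmin]] := minP sn.
have wb := hall b bin.
case: (lerP (b - w) L%:Z) => hd.
  exists b, (w - b); split; [by right| lia | |].
    by move=> v _; split; lia.
  by apply/dvdzP; exists 0; lia.
pose r := ((b - w - 1) %% L%:Z)%Z; pose q := ((b - w - 1) %/ L%:Z)%Z.
have r0 : 0 <= r by apply: modz_ge0.
have rL : r < L%:Z by apply: ltz_pmod.
have e : b - w - 1 = q * L%:Z + r by apply: divz_eq.
move: e; set X := q * L%:Z => e.
exists b, (- (r + 1)); split; [by right| lia | |].
  move=> v vs; have := bmin v vs; have := hall v vs; split; lia.
apply/dvdzP; exists (- q); rewrite mulNr -/X; lia.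
Qed.

Theorem mainTheorem4 (k m : nat) (phi : wsimple k m) (z : zvec m) :
  wsimple_wf phi ->
  (ramsey (fun x y : zvec k => exists w : int, eval_ws phi x y w z)
   <->
   ramsey (fun p q : zvec k * int * int =>
             let: (x, v1, v2) := p in
             let: (y, w1, w2) := q in
             eval_ws phi x y (v1 + w2) z /\ x <> y)).
Proof.
move=> wf; split; last first.
  case=> b [_ Hb]; exists (fun i => (b i).1.1); split.
    move=> i j ij; case: (ltngtP i j) => [h|h|h]; last by rewrite h in ij.
      have := Hb i j h; case: (b i) => [[x1 v1] v2]; case: (b j) => [[y1 w1] w2] /= [_ ne].
      exact: ne.
    have := Hb j i h; case: (b i) => [[x1 v1] v2]; case: (b j) => [[y1 w1] w2] /= [_ ne] e.
    by apply: ne.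
  move=> i j ij; have := Hb i j ij.
  case: (b i) => [[x1 v1] v2]; case: (b j) => [[y1 w1] w2] /= [H _].
  by exists (v1 + w2).
case=> a [adist Ha].
pose zt := @UTerm k m (fun _ => 0) (fun _ => 0) (fun _ => 0) 0.
pose T0 := zt :: thr phi.
pose L := mp phi.
have L0 : (0 < L)%N by apply: mp_gt0.
pose cs := [seq (l, n) | l <- iota 0 (size T0), n <- iota 0 (L + L).+1].
pose cand x y (c : nat * nat) := eval_uterm (nth zt T0 c.1) x y z + (c.2)%:Z - L%:Z.
pose P i j c := eval_ws phi (a i) (a j) (cand (a i) (a j) c) z.
have zt0 : forall x y, eval_uterm zt x y z = 0.
  by move=> x y; rewrite /eval_uterm /dot /= !big1 ?addr0 // => i _; rewrite mul0r.
have HP : forall i j, (i < j)%N -> exists2 c, c \in cs & P i j c.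
  move=> i j ij; have [w Hw] := Ha i j ij.
  pose ev := fun t => eval_uterm t (a i) (a j) z.
  have [v [d [hv hd hord hdv]]] := cell0 (map ev (thr phi)) w L0.
  have vin : v \in map ev T0.
    rewrite /= inE; case: hv => [->|->]; last by rewrite orbT.
    by rewrite /ev zt0 eqxx.
  pose l := index v (map ev T0).
  have lt : (l < size T0)%N by rewrite -(size_map ev) index_mem.
  have ve : v = ev (nth zt T0 l) by rewrite -(nth_map zt 0) // nth_index.
  have [n [ne nb]] : exists n : nat, n%:Z = d + L%:Z /\ (n <= L + L)%N.
    exists `|(d + L%:Z)%R|%N; rewrite gez0_abs; last by lia.
    split => //; lia.
  exists (l, n).
    by apply: allpairs_f; rewrite mem_iota //= add0n ltnS.
  have E : cand (a i) (a j) (l, n) = v + d.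
    rewrite /cand /= ne ve /ev; lia.
  rewrite /P E; exact: (proj1 (invariance hord hdv) Hw).
have [g [[l n] [gm gP]]] := @ramsey_pairs _ cs P (0, 0)%N HP.
have gne : forall i j, i <> j -> a (g i) <> a (g j).
  move=> i j ij; apply: adist; case: (ltngtP i j) => [h|h|h]; last by [].
    by move=> e; have := gm _ _ h; rewrite e ltnn.
  by move=> e; have := gm _ _ h; rewrite e ltnn.
pose t := nth zt T0 l.
exists (fun i => (a (g i), dot (ut_x t) (a (g i)) + dot (ut_z t) z + ut_c t + n%:Z - L%:Z,
                  dot (ut_y t) (a (g i)))).
split.
  by move=> i j ij [e _ _]; exact: (gne i j ij e).
move=> i j ij /=; split; last by apply: gne => e; rewrite e ltnn in ij.
have := gP i j ij; rewrite /P /cand /= -/t.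
suff -> : dot (ut_x t) (a (g i)) + dot (ut_z t) z + ut_c t + n%:Z - L%:Z + dot (ut_y t) (a (g j))
   = eval_uterm t (a (g i)) (a (g j)) z + n%:Z - L%:Z by [].
rewrite /eval_uterm; ring.
Qed.
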